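(* Let $R$ be a ring and $A$ an $R$-module with $\mathrm{sr}_R(A)$ finite. Let $B\subseteq C$ be $R$-submodules of $A$. Then (i) $\mathrm{sr}_R(B)\le\mathrm{sr}_R(C)\le\mathrm{sr}_R(A)$; (ii) $\mathrm{sr}_R(C/B)\le\mathrm{sr}_R(A/B)\le\mathrm{sr}_R(A)$.
   Context: A generating subset of an $R$-submodule is minimal if no proper subset of it generates that submodule. An $R$-module $M$ has special rank $\mathrm{sr}_R(M)=r$ if every finitely generated $R$-submodule of $M$ can be generated by $r$ elements and some finitely generated $R$-submodule of $M$ has a minimal generating subset of exactly $r$ elements. *)

(* Defs.v *)
From HB Require Import structures.
From mathcomp Require Import all_boot all_algebra.
Set Implicit Arguments. Unset Strict Implicit. Unset Printing Implicit Defensive.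
Import GRing.Theory.
Local Open Scope ring_scope.

Section SpecialRank.
Variables (R : nzRingType) (V : lmodType R).

Definition is_submod (M : V -> Prop) : Prop :=
  M 0 /\ (forall (a : R) (x y : V), M x -> M y -> M (a *: x + y)).

Definition span (s : seq V) : V -> Prop :=
  fun v => exists c : 'I_(size s) -> R, v = \sum_(i < size s) c i *: s`_i.

Definition sr_bound (M : V -> Prop) (r : nat) : Prop :=
  forall N : V -> Prop, is_submod N -> (forall v, N v -> M v) ->
    (exists s : seq V, forall v, N v <-> span s v) ->
    exists t : seq V, size t = r /\ (forall v, N v <-> span t v).

Definition is_sr (M : V -> Prop) (r : nat) : Prop :=
  sr_bound M r /\ forall r', sr_bound M r' -> (r <= r')%N.

End SpecialRank.

(* Main.v *)
Require Import Defs.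
From HB Require Import structures.
From mathcomp Require Import all_boot all_algebra.
From Stdlib Require Import Classical.
Import GRing.Theory.
Local Open Scope ring_scope.

Local Notation dspan := Defs.span.
Section Aux.
Variables (R : nzRingType).

Lemma spanE (V : lmodType R) (s : seq V) v :
  dspan s v <-> exists cs : seq R, v = \sum_(0 <= i < size s) cs`_i *: s`_i.
Proof.
split.
- move=> [c ->]; exists (mkseq (fun i => if insub i is Some j then c j else 0) (size s)).
  rewrite big_mkord; apply: eq_bigr => i _.
  by rewrite nth_mkseq // valK.
- move=> [cs ->]; exists (fun i => cs`_i); by rewrite big_mkord.
Qed.

Lemma span_submod (V : lmodType R) (s : seq V) : is_submod (dspan s).
Proof.
split.
- apply/spanE; exists [::]; rewrite big1 // => i _; by rewrite nth_nil scale0r.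
- move=> a x y /spanE [cs ->] /spanE [ds ->]; apply/spanE.
  exists (mkseq (fun i => a * cs`_i + ds`_i) (size s)).
  rewrite scaler_sumr -big_split /=; apply: eq_big_nat => i /andP [_ Hi].
  by rewrite nth_mkseq // scalerDl scalerA.
Qed.

Lemma span_map (V Q : lmodType R) (pi : {linear V -> Q}) (u : seq V) q :
  dspan (map pi u) q <-> exists v, dspan u v /\ pi v = q.
Proof.
have E : forall cs : seq R, pi (\sum_(0 <= i < size u) cs`_i *: u`_i) =
   \sum_(0 <= i < size (map pi u)) cs`_i *: (map pi u)`_i.
  move=> cs; rewrite linear_sum size_map; apply: eq_big_nat => i /andP [_ Hi].
  by rewrite linearZ (nth_map 0).
split.
- move=> /spanE [cs ->]; exists (\sum_(0 <= i < size u) cs`_i *: u`_i); split.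
    by apply/spanE; exists cs.
  exact: E.
- move=> [v [/spanE [cs ->] <-]]; apply/spanE; exists cs; exact: E.
Qed.

Lemma sr_bound_sub (V : lmodType R) (M M' : V -> Prop) r :
  (forall v, M v -> M' v) -> sr_bound M' r -> sr_bound M r.
Proof. move=> H Hb N HN HNM; apply: Hb => // v /HNM; exact: H. Qed.

Lemma exists_sr (V : lmodType R) (M : V -> Prop) r :
  sr_bound M r -> exists r0, is_sr M r0 /\ (r0 <= r)%N.
Proof.
elim/ltn_ind: r => r IH Hr.
case: (classic (exists r', (r' < r)%N /\ sr_bound M r')).
- move=> [r' [Hlt Hb]]; have [r0 [H1 H2]] := IH r' Hlt Hb.
  exists r0; split => //; apply: leq_trans H2 (ltnW Hlt).
- move=> Hn; exists r; split => //; split => // r' Hb.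
  rewrite leqNgt; apply/negP => Hlt; apply: Hn; by exists r'.
Qed.

Lemma lift_seq (V Q : lmodType R) (pi : {linear V -> Q}) :
  (forall q : Q, exists v : V, pi v = q) ->
  forall s : seq Q, exists s' : seq V, map pi s' = s.
Proof.
move=> Hs; elim=> [|x s [s' Hs']]; first by exists [::].
have [v Hv] := Hs x; exists (v :: s'); by rewrite /= Hv Hs'.
Qed.

Lemma quot_bound (V Q : lmodType R) (pi : {linear V -> Q}) r :
  (forall q : Q, exists v : V, pi v = q) ->
  sr_bound (fun _ : V => True) r -> sr_bound (fun _ : Q => True) r.
Proof.
move=> Hsurj Hb N HN _ [s Hs].
have [s' Hs'] := @lift_seq V Q pi Hsurj s.
have [t [Ht Hst]] := Hb (dspan s') (@span_submod V s') (fun _ _ => I)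
  (ex_intro _ s' (fun v => iff_refl _)).
exists (map pi t); split; first by rewrite size_map.
move=> q; rewrite Hs -Hs' !span_map.
split=> [[v [/Hst Hv Hq]]|[v [/Hst Hv Hq]]]; by exists v.
Qed.

End Aux.
Arguments exists_sr {R V M r}.
Arguments sr_bound_sub {R V M M' r}.
Arguments quot_bound {R V Q pi r}.

Theorem lemma1 (R : nzRingType) (V : lmodType R) (B C : V -> Prop) (rA : nat) :
  is_sr (fun _ : V => True) rA ->
  is_submod B -> is_submod C -> (forall v, B v -> C v) ->
  (exists rB rC : nat,
      is_sr B rB /\ is_sr C rC /\ (rB <= rC)%N /\ (rC <= rA)%N) /\
  (forall (Q : lmodType R) (pi : {linear V -> Q}),
      (forall q : Q, exists v : V, pi v = q) ->
      (forall v : V, pi v = 0 <-> B v) ->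
      exists rCB rAB : nat,
        is_sr (fun q : Q => exists c : V, C c /\ pi c = q) rCB /\
        is_sr (fun _ : Q => True) rAB /\ (rCB <= rAB)%N /\ (rAB <= rA)%N).
Proof.
move=> [HA _] _ _ HBC; split.
- have [rC [[HC HCm] HCA]] := exists_sr (@sr_bound_sub R V C _ rA (fun _ _ => I) HA).
  have [rB [[HB HBm] _]] := exists_sr (sr_bound_sub HBC HC).
  exists rB, rC; split; first by split.
  split; first by split.
  split => //; apply: HBm; exact: sr_bound_sub HBC HC.
- move=> Q pi Hsurj _.
  have HQ := quot_bound Hsurj HA.
  have [rAB [[HAB HABm] HABA]] := exists_sr HQ.
  have HCQ := @sr_bound_sub R Q (fun q : Q => exists c : V, C c /\ pi c = q) _ rAB
     (fun _ _ => I) HAB.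
  have [rCB [[HCB HCBm] HCBA]] := exists_sr HCQ.
  exists rCB, rAB; split; first by split.
  by split; first by split.
Qed.
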